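(* Let $N:\Sigma\to c(X)$ be a multimeasure satisfying the countable chain condition. Then there is an at most countable family $\{x'_n:n\in\mathbb N\}\subseteq X'$ such that $$\bigcap_n \mathcal N[s(x'_n,N)]=\bigcap_{x'\in X'}\mathcal N[s(x',N)].$$
   Context: $(\Omega,\Sigma)$ is a measurable space and $X$ is a Hausdorff locally convex space with dual $X'$. $c(X)$ is the family of nonempty closed convex subsets of $X$; $s(x',C)=\sup\{\langle x',x\rangle:x\in C\}$. A multimeasure is a map $M:\Sigma\to c(X)$ such that for every $x'\in X'$ the set function $s(x',M(\cdot))$ is a $\sigma$-finite countably additive measure with values in $(-\infty,+\infty]$. $\mathcal N(N)=\{E\in\Sigma:N(E)=\{0\}\}$; $N$ satisfies the countable chain condition if every family of pairwise disjoint sets in $\Sigma\setminus\mathcal N(N)$ is at most countable. For a measure $\nu:\Sigma\to(-\infty,+\infty]$, $\mathcal N[\nu]=\{E\in\Sigma:\nu(F)=0\text{ for all }F\in\Sigma,\ F\subseteq E\}$. *)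

(* Defs.v *)
From HB Require Import structures.
From mathcomp Require Import all_boot all_order all_algebra.
From mathcomp Require Import all_classical all_reals all_analysis.
Set Implicit Arguments. Unset Strict Implicit. Unset Printing Implicit Defensive.
Import Order.TTheory GRing.Theory Num.Theory.
Import numFieldTopology.Exports.
Local Open Scope classical_set_scope.
Local Open Scope ring_scope.

(* X is a (real) locally convex space: [tvsType R] in MathComp-Analysis is a
   locally convex topological vector space; Hausdorffness is an extra
   hypothesis [hausdorff_space X] in the theorem. *)

Definition in_dual (R : realType) (X : tvsType R) (f : X -> R) : Prop :=
  (forall (a : R) (x y : X), f (a *: x + y) = a * f x + f y) /\ continuous f.

Definition cX (R : realType) (X : tvsType R) (C : set X) : Prop :=
  C !=set0 /\ closed C /\ convex_set (C : set (convex_lmodType X)).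

Definition supp_fun (R : realType) (X : tvsType R) (f : X -> R) (C : set X)
  : \bar R := ereal_sup [set (f x)%:E | x in C].

Definition sf_ext_measure d (T : measurableType d) (R : realType)
  (nu : set T -> \bar R) : Prop :=
  nu set0 = 0%E /\
  (forall E, measurable E -> (-oo < nu E)%E) /\
  semi_sigma_additive nu /\
  sigma_finite [set: T] nu.

Definition multimeasure d (T : measurableType d) (R : realType) (X : tvsType R)
  (M : set T -> set X) : Prop :=
  (forall E, measurable E -> cX (M E)) /\
  (forall f, in_dual f -> sf_ext_measure (fun E => supp_fun f (M E))).

Definition null_sets d (T : measurableType d) (R : realType) (X : tvsType R)
  (M : set T -> set X) : set (set T) :=
  [set E | measurable E /\ M E = [set 0]].

Definition ccc d (T : measurableType d) (R : realType) (X : tvsType R)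
  (M : set T -> set X) : Prop :=
  forall F : set (set T),
    (forall A, F A -> measurable A /\ ~ null_sets M A) ->
    (forall A B, F A -> F B -> A <> B -> A `&` B = set0) ->
    countable F.

Definition null_meas d (T : measurableType d) (R : realType)
  (nu : set T -> \bar R) : set (set T) :=
  [set E | measurable E /\
           (forall F, measurable F -> F `<=` E -> nu F = 0%E)].

(* Main.v *)
Require Import Defs.
From HB Require Import structures.
From mathcomp Require Import all_boot all_order all_algebra.
From mathcomp Require Import all_classical all_reals all_analysis.
Import Order.TTheory GRing.Theory Num.Theory.
Import numFieldTopology.Exports.
Local Open Scope classical_set_scope.
Local Open Scope ring_scope.


Lemma maxdisj (T : Type) (Q : set (set T)) :
  exists G : set (set T), G `<=` Q /\
    (forall A B, G A -> G B -> A <> B -> A `&` B = set0) /\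
    (forall C, Q C -> C !=set0 -> exists B, G B /\ C `&` B !=set0).
Proof.
pose P := [set G : set (set T) | G `<=` Q /\
    (forall A B, G A -> G B -> A <> B -> A `&` B = set0)].
have Zp : forall F, F `<=` P -> total_on F subset -> P (\bigcup_(X in F) X).
  move=> F FP Ftot; split.
    by move=> A [G FG GA]; exact: (FP _ FG).1.
  move=> A B [G1 F1 A1] [G2 F2 B2] AB.
  have [s12|s21] := Ftot _ _ F1 F2.
    exact: ((FP _ F2).2 _ _ (s12 _ A1) B2 AB).
  exact: ((FP _ F1).2 _ _ A1 (s21 _ B2) AB).
have [G [[GQ Gd] Gmax]] := Zorn_bigcup Zp.
exists G; split => //; split => // C QC C0.
apply: contrapT => hn.
have nG : ~ G C.
  move=> GC; apply: hn; exists C; split => //; by rewrite setIid.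
apply: (Gmax (G `|` [set C])).
  split; first by move=> x Gx; left.
  by move=> h; apply: nG; apply: h; right.
split.
  by move=> A [/GQ//|->].
move=> A B [GA|->] [GB|->] AB.
- exact: Gd.
- apply: contrapT => /eqP/set0P ne; apply: hn; exists A; split => //.
  by rewrite setIC.
- apply: contrapT => /eqP/set0P ne; apply: hn; exists B; split => //.
- by [].
Qed.

Lemma enum_countable (T : Type) (G : set (set T)) : countable G ->
  exists e : nat -> set T, (forall B, G B -> exists n, e n = B) /\
    (forall n, G (e n) \/ e n = set0).
Proof.
move=> /countable_injP[f finj].
pose e n := if pselect (exists B, G B /\ f B = n) is left h
  then projT1 (cid h) else set0.
exists e; split.
  move=> B GB; exists (f B); rewrite /e; case: pselect => [h|]; last first.
    by move=> h; exfalso; apply: h; exists B.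
  have [GB' fB'] := projT2 (cid h).
  by apply: finj; rewrite ?inE.
move=> n; rewrite /e; case: pselect => [h|]; last by right.
by left; have [] := projT2 (cid h).
Qed.

Lemma nm0 {d} {T : measurableType d} {R : realType} {nu : set T -> \bar R} :
  nu set0 = 0%E -> null_meas nu set0.
Proof.
move=> h; split => // F _; rewrite subset0 => ->; exact: h.
Qed.

Lemma nm_sub {d} {T : measurableType d} {R : realType} {nu : set T -> \bar R} {E F} :
  null_meas nu E -> measurable F -> F `<=` E -> null_meas nu F.
Proof.
move=> [mE hE] mF FE; split => // G mG GF; apply: hE => //.
exact: subset_trans FE.
Qed.

Lemma nm_bigcup {d} {T : measurableType d} {R : realType} {nu : set T -> \bar R}
  {E : nat -> set T} : semi_sigma_additive nu ->
  (forall n, null_meas nu (E n)) -> null_meas nu (\bigcup_n E n).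
Proof.
move=> sa hE; split.
  by apply: bigcupT_measurable => n; exact: (hE n).1.
move=> F mF FE.
pose D := seqDU (fun n => F `&` E n).
have mD : forall n, measurable (D n).
  apply: seqDU_measurable => n; apply: measurableI => //; exact: (hE n).1.
have UD : \bigcup_n D n = F.
  rewrite -seqDU_bigcup_eq -setI_bigcupr; exact/setIidPl.
have D0 : forall n, nu (D n) = 0%E.
  move=> n; apply: (hE n).2 => //.
  move=> x Dx; have [] := subset_seqDU Dx; done.
have := sa D mD (trivIset_seqDU _); rewrite UD => /(_ mF).
under eq_fun do rewrite big1 //.
move/cvg_lim => <- //; exact: lim_cst.
Qed.

Lemma nm_setU {d} {T : measurableType d} {R : realType} {nu : set T -> \bar R} {A B} :
  nu set0 = 0%E -> semi_sigma_additive nu ->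
  null_meas nu A -> null_meas nu B -> null_meas nu (A `|` B).
Proof.
move=> h0 sa hA hB; rewrite -bigcup2E; apply: nm_bigcup => // -[|[|n]] //=.
exact: nm0.
Qed.

Lemma dual0 (R : realType) (X : tvsType R) : in_dual (fun _ : X => (0:R)).
Proof.
split; first by move=> *; rewrite mulr0 addr0.
exact: cst_continuous.
Qed.

Lemma dual_at0 (R : realType) (X : tvsType R) (f : X -> R) : in_dual f -> f 0 = 0.
Proof.
move=> [lin _]; have := lin 1 0 0; rewrite scale1r addr0 mul1r.
by move=> h; apply: (addrI (f 0)); rewrite addr0 -h.
Qed.

Lemma supp0 (R : realType) (X : tvsType R) (f : X -> R) : in_dual f ->
  supp_fun f [set 0] = 0%E.
Proof.
by move=> hf; rewrite /supp_fun image_set1 ereal_sup1 dual_at0.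
Qed.

Theorem lemma3p3 (d : measure_display) (T : measurableType d) (R : realType)
  (X : tvsType R) (HX : hausdorff_space X) (N : set T -> set X) :
  multimeasure N -> ccc N ->
  exists x' : nat -> (X -> R),
    (forall n, in_dual (x' n)) /\
    \bigcap_n null_meas (fun E => supp_fun (x' n) (N E)) =
    \bigcap_(f in in_dual (X:=X)) null_meas (fun E => supp_fun f (N E)).
Proof.
move=> [_ Msf] hccc.
pose nu f := fun E => supp_fun f (N E).
have nu0 f : in_dual f -> nu f set0 = 0%E.
  by move=> hf; have [] := Msf f hf.
have nusa f : in_dual f -> semi_sigma_additive (nu f).
  by move=> hf; have [_ [_ []]] := Msf f hf.
pose II E := forall f, in_dual f -> null_meas (nu f) E.
pose good B := measurable B /\ exists f, in_dual f /\ nu f B <> 0%E.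
have good_nn B : good B -> measurable B /\ ~ null_sets N B.
  move=> [mB [f [hf nf]]]; split => // -[_ NB]; apply: nf.
  by rewrite /nu NB supp0.
have good_ne B : good B -> B !=set0.
  move=> [_ [f [hf nf]]]; apply/set0P/eqP => B0; apply: nf; rewrite B0.
  exact: nu0.
have notnull f E : in_dual f -> measurable E -> ~ null_meas (nu f) E ->
    exists F, [/\ measurable F, F `<=` E & good F /\ nu f F <> 0%E].
  move=> hf mE nE; apply: contrapT => hn; apply: nE; split => // F mF FE.
  apply: contrapT => nF; apply: hn; exists F; split => //.
  split => //; split => //; by exists f.
have cccG (G : set (set T)) : G `<=` good ->
    (forall A B, G A -> G B -> A <> B -> A `&` B = set0) -> countable G.
  by move=> Gg Gd; apply: hccc => // A GA; apply: good_nn; apply: Gg.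
have step1 f : exists U, in_dual f -> null_meas (nu f) U /\
    forall E, null_meas (nu f) E -> II (E `\` U).
  have [hf|nf] := pselect (in_dual f); last by exists set0.
  pose Q := [set B | good B /\ null_meas (nu f) B].
  have [G [GQ [Gd Gmax]]] := maxdisj _ Q.
  have [e [eG eG']] := enum_countable _ _ (cccG G (fun B GB => (GQ B GB).1) Gd).
  exists (\bigcup_n e n) => _.
  have enull n : null_meas (nu f) (e n).
    by case: (eG' n) => [/GQ[]//|->]; exact: nm0 (nu0 f hf).
  split; first exact: nm_bigcup (nusa f hf) enull.
  move=> E hE g hg.
  have mU : measurable (\bigcup_n e n) := (nm_bigcup (nusa f hf) enull).1.
  split; first by apply: measurableD => //; exact: hE.1.
  move=> F mF FE; apply: contrapT => nF.
  have gF : good F by split => //; exists g.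
  have QF : Q F by split => //; apply: nm_sub hE mF (fun x Fx => (FE x Fx).1).
  have [B [GB [x [Fx Bx]]]] := Gmax F QF (good_ne F gF).
  have [n enB] := eG B GB.
  by apply: (FE x Fx).2; exists n => //; rewrite enB.
have [U hU] := choice step1.
pose S W f := in_dual f /\ forall H, measurable H -> H `<=` W ->
  null_meas (nu f) H -> II H.
pose Q2 := [set W | good W /\ exists f, S W f].
have [G [GQ [Gd Gmax]]] := maxdisj _ Q2.
have [e [eG eG']] := enum_countable _ _ (cccG G (fun B GB => (GQ B GB).1) Gd).
pose wit W := if pselect (exists f, S W f) is left h then projT1 (cid h)
  else (fun _ : X => 0 : R).
have witS W : G W -> S W (wit W).
  move=> GW; rewrite /wit; case: pselect => [h|]; first exact: projT2 (cid h).
  by move=> h; exfalso; apply: h; exact: (GQ W GW).2.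
have witD W : in_dual (wit W).
  rewrite /wit; case: pselect => [h|_]; last exact: dual0.
  exact: (projT2 (cid h)).1.
have emeas n : measurable (e n).
  by case: (eG' n) => [/GQ[[]]//|->].
exists (fun n => wit (e n)); split; first by move=> n; exact: witD.
apply/seteqP; split; last first.
  by move=> E hE n _; apply: hE; exact: witD.
move=> E hE g hg.
have mE : measurable E by have [] := hE 0%N I.
have [hU1 hU2] := hU g hg.
have mU : measurable (U g) := hU1.1.
rewrite -(setUIDK E (U g)).
apply: nm_setU; [exact: nu0|exact: nusa| |].
  by apply: nm_sub hU1 _ (@subIsetr _ _ _); exact: measurableI.
set H := E `\` U g.
have mH : measurable H by exact: measurableD.
suff : II H by move/(_ g hg).
have SH K : measurable K -> K `<=` H -> S K g.
  move=> mK KH; split => // H' mH' H'K nH' h' hh'.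
  have := hU2 H' nH' h' hh'.
  suff -> : H' `\` U g = H' by [].
  apply/setDidPl; rewrite disjoints_subset => x /H'K /KH [].
  by move=> _ nU.
move=> h hh; apply: contrapT => nH.
have [K [mK KH [gK nK]]] := notnull h H hh mH nH.
have mUe : measurable (\bigcup_n e n) by exact: bigcupT_measurable.
pose K' := K `\` \bigcup_n e n.
have mK' : measurable K' by exact: measurableD.
have nK' : ~ null_meas (nu h) K'.
  move=> hK'.
  have hKe : null_meas (nu h) (\bigcup_n (K `&` e n)).
    apply: nm_bigcup; first exact: nusa.
    move=> n; case: (eG' n) => [Gen|->]; last first.
      by rewrite setI0; exact: nm0 (nu0 h hh).
    have [_ hS] := witS _ Gen.
    apply: (hS _ (measurableI _ _ mK (emeas n)) (@subIsetr _ _ _) _ h hh).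
    apply: nm_sub (hE n I) (measurableI _ _ mK (emeas n)) _.
    by move=> x [/KH[]].
  have := nm_setU (nu0 h hh) (nusa h hh) hK' hKe.
  move=> /nm_sub /(_ mK) h1.
  suff : null_meas (nu h) K by move=> [_ /(_ K mK (@subset_refl _ _))].
  apply: h1 => x Kx.
  have [xU|xU] := pselect ((\bigcup_n e n) x); last by left.
  by right; case: xU => n _ enx; exists n.
have [K'' [mK'' K''K' [gK'' _]]] := notnull h K' hh mK' nK'.
have QK'' : Q2 K''.
  split => //; exists g; apply: SH => // x /K''K' [/KH] + _; exact.
have [B [GB [x [K''x Bx]]]] := Gmax K'' QK'' (good_ne K'' gK'').
have [n enB] := eG B GB.
have [_ nx] := K''K' x K''x.
by apply: nx; exists n => //; rewrite enB.
Qed.
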